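(* For any $\mathcal{H}\subseteq\{0,1\}^{\mathcal{X}}$ and $w\in\mathbb{N}$ with $\operatorname{AL}_w(\mathcal{H})<\infty$, there exists a deterministic online learner which, under full-information feedback and on any sequence $(x_1,y_1),\dots,(x_T,y_T)$ realizable by $\mathcal{H}$ (i.e. $y_t=h(x_t)$ for some $h\in\mathcal{H}$ and all $t$), makes at most $w-1$ false negative mistakes and at most $\operatorname{AL}_w(\mathcal{H})$ false positive mistakes.
   Context: Online binary classification with full-information feedback: in each round $t$ the learner receives $x_t\in\mathcal{X}$, predicts $\hat y_t\in\{0,1\}$, and then observes the true label $y_t$. A false positive mistake is a round with $\hat y_t=1,y_t=0$; a false negative mistake is a round with $\hat y_t=0,y_t=1$. AL tree of width $w\in\mathbb{N}=\{1,2,\dots\}$ and depth $d$: a binary string $u$ is an internal node if $|u|<d$ and $u$ has fewer than $w$ ones; the tree assigns $x_u\in\mathcal{X}$ to each internal node. A path is a binary string $\sigma$ whose proper prefixes are all internal nodes but which is not itself one. The tree is shattered by $\mathcal{H}$ if for every path $\sigma$ some $h\in\mathcal{H}$ satisfies $h(x_{(\sigma_1,\dots,\sigma_{i-1})})=\sigma_i$ for all $i\le|\sigma|$. $\operatorname{AL}_w(\mathcal{H})$ is the largest $d$ such that such a tree of width $w$ and depth $d$ is shattered ($\infty$ if unbounded, $0$ if none). *)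

(* Defs.v *)
From mathcomp Require Import all_boot.
Set Implicit Arguments. Unset Strict Implicit. Unset Printing Implicit Defensive.

Definition hclass (X : Type) := (X -> bool) -> Prop.

(* AL trees. A tree is a labelling of binary strings (seq bool) by points of X;
   only the labels on internal nodes matter. *)
Definition al_internal (w d : nat) (u : seq bool) : bool :=
  (size u < d) && (count id u < w).

Definition al_path (w d : nat) (sigma : seq bool) : Prop :=
  (forall i, i < size sigma -> al_internal w d (take i sigma)) /\
  ~~ al_internal w d sigma.

(* The tree x (width w, depth d) is shattered by H: for every path sigma some
   h in H satisfies h(x_{(sigma_1..sigma_{i-1})}) = sigma_i for all i <= |sigma|
   (0-indexed below: prefix take i sigma, label nth false sigma i). *)
Definition al_shattered X (H : hclass X) (w d : nat) (x : seq bool -> X) : Prop :=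
  forall sigma, al_path w d sigma ->
    exists h, H h /\
      forall i, i < size sigma -> h (x (take i sigma)) = nth false sigma i.

(* AL_w(H) = D (a finite value): D is the largest depth of a shattered width-w
   tree, with D = 0 if no such tree is shattered. *)
Definition AL_is X (H : hclass X) (w D : nat) : Prop :=
  (D = 0 \/ exists x : seq bool -> X, al_shattered H w D x) /\
  (forall d (x : seq bool -> X), al_shattered H w d x -> d <= D).

(* Deterministic online learner: prediction from the history of labelled
   examples (chronological order) and the current instance. *)
Definition learner (X : Type) := seq (X * bool) -> X -> bool.

Fixpoint fp_mistakes X (L : learner X) (hist s : seq (X * bool)) : nat :=
  match s with
  | [::] => 0
  | (x, y) :: s' => (L hist x && ~~ y) + fp_mistakes L (rcons hist (x, y)) s'
  end.

Fixpoint fn_mistakes X (L : learner X) (hist s : seq (X * bool)) : nat :=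
  match s with
  | [::] => 0
  | (x, y) :: s' => (~~ L hist x && y) + fn_mistakes L (rcons hist (x, y)) s'
  end.

Definition realizable X (H : hclass X) (s : seq (X * bool)) : Prop :=
  exists h, H h /\ all (fun p : X * bool => h p.1 == p.2) s.

(* Main.v *)
Require Import Defs.
From mathcomp Require Import all_boot.
From mathcomp Require Import zify.
From Stdlib Require Import Classical ClassicalEpsilon.
Set Implicit Arguments. Unset Strict Implicit.

Section Aux.
Variable X : Type.

Lemma path_size w d s : al_path w d s -> size s <= d.
Proof.
move=> [Hp _]; rewrite leqNgt; apply/negP => Hd.
have := Hp d Hd; rewrite /al_internal size_take Hd ltnn. by [].
Qed.

Lemma path_nil w d s : (w = 0 \/ d = 0) -> al_path w d s -> s = [::].
Proof.
move=> Hwd; case: s => // b s [Hp _].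
have := Hp 0 isT; rewrite /al_internal /=.
by case: Hwd => ->; rewrite ?andbF.
Qed.

Lemma shat_nonempty (V : hclass X) w d T h : V h -> (w = 0 \/ d = 0) ->
  al_shattered V w d T.
Proof.
move=> Vh Hwd s Hs; rewrite (path_nil Hwd Hs); exists h; split => // i.
Qed.

Lemma shat_sub (V V' : hclass X) w d T : (forall h, V h -> V' h) ->
  al_shattered V w d T -> al_shattered V' w d T.
Proof.
move=> Hsub Hs s Hp; have [h [Vh Hh]] := Hs s Hp; exists h; split => //.
exact: Hsub.
Qed.

Lemma shat_mono1 (V : hclass X) w d T :
  al_shattered V w d.+1 T -> al_shattered V w d T.
Proof.
move=> Hs s Hps.
have Hsz := path_size Hps.
case: Hps => [Hp Hn].
case: (boolP (count id s < w)) => Hc.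
- have Hsd : size s = d.
    move: Hn; rewrite /al_internal Hc andbT -leqNgt => ?; lia.
  have [|h [Vh Hh]] := Hs (rcons s false).
    split.
    + move=> i; rewrite size_rcons ltnS => Hi.
      rewrite -cats1 takel_cat //.
      case: (ltnP i (size s)) => Hi'.
      * have := Hp i Hi'; rewrite /al_internal => /andP [H1 H2].
        apply/andP; split => //; lia.
      * have -> : i = size s by lia.
        rewrite take_size /al_internal Hc andbT; lia.
    + rewrite /al_internal size_rcons; apply/negP => /andP [H1 _]; lia.
  exists h; split => // i Hi.
  have := Hh i; rewrite size_rcons -cats1 takel_cat; last by lia.
  rewrite cats1 nth_rcons_default; apply; lia.
- have [|h [Vh Hh]] := Hs s.
    split.
    + move=> i Hi; have := Hp i Hi; rewrite /al_internal => /andP [H1 H2].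
      apply/andP; split => //; lia.
    + by rewrite /al_internal (negbTE Hc) andbF.
  by exists h.
Qed.

Lemma shat_mono (V : hclass X) w d d' T :
  d' <= d -> al_shattered V w d T -> al_shattered V w d' T.
Proof.
elim: d => [|d IH] Hle Hs.
- by have -> : d' = 0 by lia.
- case: (ltnP d' d.+1) => H.
  + apply: IH; first lia. exact: shat_mono1.
  + by have -> : d' = d.+1 by lia.
Qed.

Definition restr (V : hclass X) (x : X) (b : bool) : hclass X :=
  fun h => V h /\ h x = b.

Definition join (x : X) (T0 T1 : seq bool -> X) : seq bool -> X :=
  fun u => match u with [::] => x | b :: u' => if b then T1 u' else T0 u' end.

Lemma internal_cons w d b u : 0 < w ->
  al_internal w d.+1 (b :: u) = al_internal (if b then w.-1 else w) d u.
Proof.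
case: w => // w _; rewrite /al_internal /= ltnS.
by case: b => //=; rewrite add1n ltnS.
Qed.

Lemma combine (V : hclass X) x w d T0 T1 : 0 < w ->
  al_shattered (restr V x false) w d T0 ->
  al_shattered (restr V x true) w.-1 d T1 ->
  al_shattered V w d.+1 (join x T0 T1).
Proof.
move=> w0 S0 S1 [|b s] [Hp Hn].
  by move: Hn; rewrite /al_internal /= w0.
have Hps : al_path (if b then w.-1 else w) d s.
  split.
  - move=> i Hi; have := Hp i.+1; rewrite /= internal_cons //; apply; by [].
  - by move: Hn; rewrite internal_cons.
case: b Hps Hp Hn => Hps Hp Hn.
- have [h [[Vh hx] Hh]] := S1 s Hps.
  exists h; split => //; case => [|i] //= Hi; exact: Hh.
- have [h [[Vh hx] Hh]] := S0 s Hps.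
  exists h; split => //; case => [|i] //= Hi; exact: Hh.
Qed.

Lemma max_exists (P : nat -> Prop) B : P 0 -> (forall d, P d -> d <= B) ->
  exists m, P m /\ forall d, P d -> d <= m.
Proof.
elim: B => [|B IH] P0 HB.
- by exists 0; split.
- case: (classic (P B.+1)) => HP.
  + by exists B.+1; split.
  + apply: IH => // d Pd; have := HB d Pd.
    rewrite leq_eqVlt => /orP [/eqP E|]; first by subst. by [].
Qed.

Definition cls (H : hclass X) (hist : seq (X * bool)) : hclass X :=
  fun h => H h /\ all (fun p : X * bool => h p.1 == p.2) hist.

Definition P0 (V : hclass X) w' x : Prop :=
  forall d T, al_shattered V w' d T ->
    exists T0, al_shattered (restr V x false) w' d T0.

Definition dec (H : hclass X) hist w' x : bool :=
  if excluded_middle_informative (P0 (cls H hist) w' x) then false else true.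

Fixpoint run (H : hclass X) (pre : seq (X * bool)) (w' : nat) s : nat :=
  match s with
  | [::] => w'
  | (x, y) :: s' =>
      run H (rcons pre (x, y)) (if ~~ dec H pre w' x && y then w'.-1 else w') s'
  end.

Definition Lrn (H : hclass X) w : learner X :=
  fun hist x => dec H hist (run H [::] w hist) x.

Lemma run_rcons H pre w0 s x y :
  run H pre w0 (rcons s (x, y)) =
  (let w1 := run H pre w0 s in
   if ~~ dec H (pre ++ s) w1 x && y then w1.-1 else w1).
Proof.
elim: s pre w0 => [|[x' y'] s IH] pre w0 /=; first by rewrite cats0.
by rewrite IH cat_rcons.
Qed.

Lemma cls_rcons H hist x y h :
  cls H (rcons hist (x, y)) h <-> restr (cls H hist) x y h.
Proof.
rewrite /cls /restr all_rcons /=; split.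
- by move=> [Hh /andP [/eqP -> ->]].
- by move=> [[Hh ->] <-]; rewrite eqxx.
Qed.

Lemma main (H : hclass X) w s : forall hist w' B,
  run H [::] w hist = w' -> 0 < w' ->
  (forall d T, al_shattered (cls H hist) w' d T -> d <= B) ->
  (exists h, cls H (hist ++ s) h) ->
  fn_mistakes (Lrn H w) hist s <= w'.-1 /\ fp_mistakes (Lrn H w) hist s <= B.
Proof.
elim: s => [|[x y] s IH] hist w' B Hrun Hw HB [hs [Hhs Hall]] /=.
  by [].
move: Hall; rewrite all_cat /= => /and3P [Ahist /eqP hsx Arest].
set V := cls H hist.
have Vhs : V hs by split.
have Hrun' := run_rcons H [::] w hist x y.
rewrite /= Hrun in Hrun'.
have Hcl : exists h, cls H (rcons hist (x, y) ++ s) h.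
  exists hs; split => //; rewrite cat_rcons all_cat /= Ahist Arest hsx eqxx.
  by [].
have Lx : Lrn H w hist x = dec H hist w' x by rewrite /Lrn Hrun.
have Sub : forall d T, al_shattered (cls H (rcons hist (x, y))) w' d T ->
    al_shattered V w' d T.
  move=> d T; apply: shat_sub => h /cls_rcons [] //.
rewrite Lx; move: Hrun'; rewrite /dec.
case: excluded_middle_informative => HP0 Hrun'.
- case: y hsx Hrun' Hcl Sub => hsx Hrun' Hcl Sub /=.
  + (* false negative *)
    have [m [[Tm Sm] Mm]] := max_exists (P := fun d => exists T, al_shattered V w' d T)
       (B := B) (ex_intro _ (fun _ => x) (shat_nonempty (w := w') (d := 0) (fun _ => x) Vhs (or_intror erefl)))
       (fun d '(ex_intro T Sd) => HB d T Sd).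
    have [T0 S0] := HP0 m Tm Sm.
    have Claim : forall d T1, al_shattered (restr V x true) w'.-1 d T1 -> d < m.
      move=> d T1 S1; rewrite ltnNge; apply/negP => Hmd.
      have S1' := shat_mono Hmd S1.
      have := Mm m.+1 (ex_intro _ _ (combine Hw S0 S1')); lia.
    have Hw1 : 0 < w'.-1.
      case: (posnP w'.-1) => // E.
      have := Claim m (fun _ => x).
      have -> : w'.-1 = 0 by [].
      move=> C; have := C (shat_nonempty (V := restr V x true) (w := 0) (d := m) (fun _ => x) (conj Vhs hsx) (or_introl erefl)).
      by rewrite ltnn.
    have Hb : forall d T, al_shattered (cls H (rcons hist (x, true))) w'.-1 d T -> d <= B.
      move=> d T Sd.
      have : d < m.
        apply: (Claim d T); apply: shat_sub Sd => h /cls_rcons.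
        by [].
      have := HB m Tm Sm; lia.
    have [H1 H2] := IH (rcons hist (x, true)) w'.-1 B Hrun' Hw1 Hb Hcl.
    split; lia.
  + have Hb : forall d T, al_shattered (cls H (rcons hist (x, false))) w' d T -> d <= B.
      move=> d T Sd; exact: HB d T (Sub d T Sd).
    have [H1 H2] := IH (rcons hist (x, false)) w' B Hrun' Hw Hb Hcl.
    by split.
- case: y hsx Hrun' Hcl Sub => hsx Hrun' Hcl Sub /=.
  + have Hb : forall d T, al_shattered (cls H (rcons hist (x, true))) w' d T -> d <= B.
      move=> d T Sd; exact: HB d T (Sub d T Sd).
    have [H1 H2] := IH (rcons hist (x, true)) w' B Hrun' Hw Hb Hcl.
    by split.
  + (* false positive *)
    have [d [[T Sd] Hno]] : exists d, (exists T, al_shattered V w' d T) /\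
        (forall T0, ~ al_shattered (restr V x false) w' d T0).
      apply: NNPP => Hne; apply: (HP0) => d T S; apply: NNPP => Hno.
      apply: Hne; exists d; split; first by exists T.
      by move=> T0 S0; apply: Hno; exists T0.
    have Hdb := HB d T Sd.
    have Claim : forall d' T', al_shattered (cls H (rcons hist (x, false))) w' d' T' -> d' < d.
      move=> d' T' S'; rewrite ltnNge; apply/negP => Hle.
      apply: (Hno T'); apply: shat_mono Hle _.
      by apply: shat_sub S' => h /cls_rcons.
    have Hd0 : 0 < d.
      apply: (Claim 0 (fun _ => x)).
      have Hc : cls H (rcons hist (x, false)) hs by apply/cls_rcons; split.
      exact: (shat_nonempty (w := w') (d := 0) (fun _ => x) Hc (or_intror erefl)).
    have Hb : forall d' T', al_shattered (cls H (rcons hist (x, false))) w' d' T' -> d' <= B.-1.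
      move=> d' T' S'; have := Claim d' T' S'; lia.
    have [H1 H2] := IH (rcons hist (x, false)) w' B.-1 Hrun' Hw Hb Hcl.
    split; lia.
Qed.

End Aux.

Theorem lemma3 (X : Type) (H : hclass X) (w D : nat) :
  0 < w -> AL_is H w D ->
  exists L : learner X,
    forall s : seq (X * bool), realizable H s ->
      fn_mistakes L [::] s <= w.-1 /\ fp_mistakes L [::] s <= D.
Proof.
move=> Hw [_ HD]; exists (Lrn H w) => s [h [Hh Hall]].
apply: (main (w' := w) (B := D)) => //.
- move=> d T Sd; apply: (HD d T); apply: shat_sub Sd => h' [].
  by [].
- by exists h; split.
Qed.
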